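(* Let $k \ge 1$. If $M$ is a simple matroid and $X \subseteq E(M)$, then every $k$-pseudoclaw of $M / X$ is a $k$-claw of $M$.
   Context: A claw of a matroid $N$ is a set that is both a flat and an independent set of $N$; a $k$-claw is a claw of size $k$. A simplification of a matroid $N$ is any matroid obtained from $N$ by deleting all loops and all but one element from each parallel class. A set $F$ is a $k$-pseudoclaw of $N$ if $F$ is a $k$-claw of some simplification of $N$. *)

(* Defs.v *)
From mathcomp Require Import all_boot all_order.
Set Implicit Arguments. Unset Strict Implicit. Unset Printing Implicit Defensive.

Section Matroids.
Variable T : finType.

Record matroid := Matroid { ground : {set T}; indep : pred {set T} }.

Definition is_matroid (M : matroid) : Prop :=
  [/\ forall I : {set T}, indep M I -> I \subset ground M,
      indep M set0,
      forall I J : {set T}, indep M J -> I \subset J -> indep M I &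
      forall I J : {set T}, indep M I -> indep M J -> #|I| < #|J| ->
        exists2 e, e \in J :\: I & indep M (e |: I)].

Definition rank (M : matroid) (A : {set T}) : nat :=
  \max_(I : {set T} | (I \subset A) && indep M I) #|I|.

Definition is_loop (M : matroid) (e : T) : bool :=
  (e \in ground M) && ~~ indep M [set e].

Definition parallel (M : matroid) (e f : T) : bool :=
  [&& e \in ground M, f \in ground M, e != f,
      ~~ is_loop M e, ~~ is_loop M f & ~~ indep M [set e; f]].

(* simple: no loops and no parallel pairs *)
Definition simple (M : matroid) : Prop :=
  forall e f : T, e \in ground M -> f \in ground M -> indep M [set e; f].

Definition delete (M : matroid) (D : {set T}) : matroid :=
  Matroid (ground M :\: D) (fun I => indep M I && (I \subset ground M :\: D)).

(* contraction M / X: I is independent iff I ⊆ E - X and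
   r(I ∪ X) = |I| + r(X) (equivalently, I ∪ B_X is independent for a basis
   B_X of X) *)
Definition contract (M : matroid) (X : {set T}) : matroid :=
  Matroid (ground M :\: X)
    (fun I => (I \subset ground M :\: X) &&
              (rank M (I :|: X) == #|I| + rank M X)).

(* N' is a simplification of N: N' = N \ D where D consists of all loops
   of N and all but one element of each parallel class of N. Parallel
   classes are the classes of non-loops under "equal or parallel". *)
Definition simplification_of (N N' : matroid) : Prop :=
  exists D : {set T},
    [/\ N' = delete N D, D \subset ground N,
        forall e : T, is_loop N e -> e \in D &
        forall e : T, e \in ground N -> ~~ is_loop N e ->
          #|[set f in ground N :\: D | (f == e) || parallel N f e]| = 1].

Definition flat (M : matroid) (F : {set T}) : Prop :=
  F \subset ground M /\
  forall e : T, e \in ground M :\: F -> rank M (e |: F) = (rank M F).+1.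

Definition claw (M : matroid) (k : nat) (F : {set T}) : Prop :=
  [/\ flat M F, indep M F & #|F| = k].

Definition pseudoclaw (N : matroid) (k : nat) (F : {set T}) : Prop :=
  exists2 N', simplification_of N N' & claw N' k F.

End Matroids.

(* Main.v *)
Require Import Defs.
From mathcomp Require Import all_boot all_order.
From mathcomp Require Import zify.
Set Implicit Arguments. Unset Strict Implicit.

Section Aux.
Variable T : finType.
Implicit Types (M : matroid T) (A B I J : {set T}).

Lemma rank_wit M A : indep M set0 ->
  exists2 I : {set T}, (I \subset A) && indep M I & #|I| = rank M A.
Proof.
move=> h0.
case: (@arg_maxnP _ set0 (fun I : {set T} => (I \subset A) && indep M I) (fun I : {set T} => #|I|)).
  by rewrite sub0set h0.
move=> I PI maxI; exists I => //.
apply/eqP; rewrite eqn_leq /rank (leq_bigmax_cond (F := fun I : {set T} => #|I|) _ PI) /=.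
by apply/bigmax_leqP => J PJ; exact: maxI.
Qed.

Lemma indep_rank M A I : indep M I -> I \subset A -> #|I| <= rank M A.
Proof.
move=> hI hIA; rewrite /rank.
by apply: (leq_bigmax_cond (F := fun I : {set T} => #|I|)); rewrite hIA hI.
Qed.

Lemma rank_card M A : rank M A <= #|A|.
Proof. by apply/bigmax_leqP => I /andP[hIA _]; exact: subset_leq_card. Qed.

Lemma rank_mono M A B : A \subset B -> rank M A <= rank M B.
Proof.
move=> hAB; apply/bigmax_leqP => I /andP[hIA hI].
by apply: (leq_bigmax_cond (F := fun I : {set T} => #|I|)); rewrite hI (subset_trans hIA hAB).
Qed.

Lemma indep_of_rank M I : indep M set0 -> #|I| <= rank M I -> indep M I.
Proof.
move=> h0 h; have [J /andP[hJI hJ] hJr] := rank_wit I h0.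
have /eqP <- // : J == I by rewrite eqEcard hJI hJr.
Qed.

Variable M : matroid T.
Hypothesis hM : is_matroid M.

Lemma rank_add1 x A : rank M (x |: A) <= (rank M A).+1.
Proof.
have [_ h0 hdown _] := hM.
have [J /andP[hJ hJi] <-] := rank_wit (x |: A) h0.
have hJA : J :\ x \subset A.
  apply/subsetP => y; rewrite !inE => /andP[hyx hyJ].
  by move/subsetP: hJ => /(_ y hyJ); rewrite !inE (negPf hyx).
have := indep_rank (hdown _ _ hJi (subsetDl J [set x])) hJA.
rewrite (cardsD1 x J); case: (x \in J) => /=; lia.
Qed.

Lemma extend (S I : {set T}) : indep M I -> I \subset S ->
  exists J, [/\ I \subset J, J \subset S, indep M J & #|J| = rank M S].
Proof.
have [_ h0 hdown haug] := hM.
have [K /andP[hKS hK] hKr] := rank_wit S h0.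
move Hn : (rank M S - #|I|) => n.
elim: n I Hn => [|n IH] I Hn hI hIS.
  exists I; split => //; apply/eqP; rewrite eqn_leq indep_rank //=.
  lia.
have : #|I| < #|K| by rewrite hKr; lia.
move=> /(haug _ _ hI hK) [e /setDP[heK heI] hi].
have heS : e |: I \subset S.
  by rewrite subUset sub1set (subsetP hKS _ heK) hIS.
have [J [h1 h2 h3 h4]] := IH (e |: I) ltac:(rewrite cardsU1 heI; lia) hi heS.
exists J; split => //; apply: subset_trans h1; exact: subsetUr.
Qed.

Lemma submod A B : rank M (A :|: B) + rank M (A :&: B) <= rank M A + rank M B.
Proof.
have [_ h0 hdown _] := hM.
have [I /andP[hIAB hI] hIr] := rank_wit (A :&: B) h0.
have hIU : I \subset A :|: B.
  exact: subset_trans (subset_trans hIAB (subsetIl A B)) (subsetUl A B).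
have [J [hIJ hJ hJi hJr]] := extend hI hIU.
rewrite -hJr -hIr.
have hA := indep_rank (hdown _ _ hJi (subsetIl J A)) (subsetIr J A).
have hB := indep_rank (hdown _ _ hJi (subsetIl J B)) (subsetIr J B).
have hU : (J :&: A) :|: (J :&: B) = J.
  apply/setP => x; rewrite !inE; case hx: (x \in J) => //=.
  by move/subsetP: hJ => /(_ x hx); rewrite !inE.
have hI' : #|I| <= #|(J :&: A) :&: (J :&: B)|.
  apply: subset_leq_card; apply/subsetP => x hx.
  have := subsetP hIJ x hx; have := subsetP hIAB x hx; rewrite !inE.
  by move=> /andP[-> ->] ->.
have := cardsUI (J :&: A) (J :&: B); rewrite hU; lia.
Qed.

End Aux.

Theorem lemma2p1 (T : finType) (M : matroid T) (X : {set T}) (k : nat) :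
  1 <= k -> is_matroid M -> simple M -> X \subset ground M ->
  forall F : {set T}, pseudoclaw (contract M X) k F -> claw M k F.
Proof.
move=> _ hM hs hXE F [N' [D [-> hDsub hloop hpar]] [[hFsub hflat] hFind hcard]].
have [_ h0 hdown haug] := hM.
have hFind' := hFind.
move: hFind => /= /andP [/andP [hFEX /eqP hFr] hFD].
have hFE : F \subset ground M := subset_trans hFEX (subsetDl _ _).
have hsm := submod hM.
have hrFX : rank M (F :|: X) <= rank M F + rank M X.
  exact: leq_trans (leq_addr _ _) (hsm F X).
have hFM : indep M F.
  by apply: indep_of_rank => //; rewrite -(leq_add2r (rank M X)) -hFr.
have hrF : rank M F = #|F|.
  by apply/eqP; rewrite eqn_leq rank_card indep_rank.
have L1 : forall e, e \in (ground M :\: X :\: D) :\: F ->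
    rank M (e |: F :|: X) = #|F|.+1 + rank M X.
  move=> e he.
  have heF : e \notin F by move: he; rewrite inE => /andP[].
  have h1 := hflat e he.
  have h2 := indep_rank hFind' (subxx F).
  have hN0 : indep (delete (contract M X) D) set0.
    by rewrite /= !sub0set set0U cards0 add0n eqxx.
  have : indep (delete (contract M X) D) (e |: F).
    by apply: indep_of_rank => //; rewrite h1 cardsU1 heF.
  by move=> /= /andP[/andP[_ /eqP ->] _]; rewrite cardsU1 heF.
split => //; split => // e /setDP [heE heF].
rewrite hrF; apply/eqP; rewrite eqn_leq.
have -> /= : rank M (e |: F) <= #|F|.+1.
  by apply: leq_trans (rank_card _ _) _; rewrite cardsU1 heF.
rewrite ltnNge; apply/negP => H.
have hee : indep M [set e] by have := hs e e heE heE; rewrite setUid.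
case: (boolP (e \in X)) => heX.
  have := hsm (e |: F) X.
  have h1 : rank M (F :|: X) <= rank M (e |: F :|: X).
    by apply: rank_mono; apply/subsetP => x; rewrite !inE; case/orP => ->; rewrite ?orbT.
  have h2 : 1 <= rank M ((e |: F) :&: X).
    by rewrite -(cards1 e); apply: (indep_rank hee); rewrite sub1set !inE eqxx heX.
  clear -H h1 h2 hFr; lia.
case: (boolP (is_loop (contract M X) e)) => hl.
  move: hl; rewrite /is_loop /= => /andP[heN].
  rewrite sub1set heN /= cards1 => hne.
  have hr := rank_add1 hM e X.
  have hB : rank M (e |: X) <= rank M X by clear -hne hr; lia.
  have := hsm (e |: F) (e |: X).
  have h1 : rank M (F :|: X) <= rank M (e |: F :|: (e |: X)).
    by apply: rank_mono; apply/subsetP => x; rewrite !inE; case/orP => ->; rewrite ?orbT.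
  have h2 : 1 <= rank M ((e |: F) :&: (e |: X)).
    by rewrite -(cards1 e); apply: (indep_rank hee); rewrite sub1set !inE eqxx.
  clear -H h1 h2 hFr hB; lia.
have heN : e \in ground M :\: X by rewrite inE heX heE.
case: (boolP (e \in D)) => heD; last first.
  have := L1 e ltac:(by rewrite !inE heX heE heD heF).
  have := hsm (e |: F) X.
  clear -H; lia.
have := hpar e heN hl.
move/eqP/cards1P => [f hS].
have hfS : f \in [set f0 in ground (contract M X) :\: D
     | (f0 == e) || parallel (contract M X) f0 e] by rewrite hS set11.
move: hfS; rewrite inE => /andP [hfND /orP [/eqP fe | hfpar]].
  by move: hfND; rewrite fe inE heD.
case/andP: hfpar => hfN /andP[_ /andP[hfe /andP[_ /andP[_ hdep]]]].
have hfE : f \in ground M by move: hfN; rewrite inE => /andP[].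
have hfeM : indep M [set f; e] := hs f e hfE heE.
move: hdep; rewrite /= negb_and.
have -> /= : [set f; e] \subset ground M :\: X.
  by apply/subsetP => x; rewrite !inE => /orP[]/eqP->; [move: hfN|move: heN]; rewrite inE.
rewrite cards2 hfe => hne.
have hr : rank M ([set f; e] :|: X) <= (rank M X).+2.
  rewrite -setUA; apply: leq_trans (rank_add1 hM _ _) _.
  by rewrite ltnS rank_add1.
have hB : rank M ([set f; e] :|: X) <= (rank M X).+1 by clear -hne hr; lia.
case: (boolP (f \in F)) => hfF.
  have := hsm (e |: F) ([set f; e] :|: X).
  have h1 : rank M (F :|: X) <= rank M (e |: F :|: ([set f; e] :|: X)).
    by apply: rank_mono; apply/subsetP => x; rewrite !inE; case/orP => ->; rewrite ?orbT.
  have h2 : 2 <= rank M ((e |: F) :&: ([set f; e] :|: X)).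
    have <- : #|[set f; e]| = 2 by rewrite cards2 hfe.
    apply: (indep_rank hfeM).
    by apply/subsetP => x; rewrite !inE => /orP[]/eqP->; rewrite !eqxx ?hfF ?orbT.
  clear -H h1 h2 hFr hB; lia.
have := L1 f ltac:(by rewrite inE hfF hfND).
have := hsm (e |: F) ([set f; e] :|: X).
have h1 : rank M (f |: F :|: X) <= rank M (e |: F :|: ([set f; e] :|: X)).
  by apply: rank_mono; apply/subsetP => x; rewrite !inE; case/orP => [/orP[]|] ->; rewrite ?orbT.
have h2 : 1 <= rank M ((e |: F) :&: ([set f; e] :|: X)).
  by rewrite -(cards1 e); apply: (indep_rank hee); rewrite sub1set !inE eqxx ?orbT.
clear -H h1 h2 hB; lia.
Qed.
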